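(* Let $N$ be an Orlicz function with $N(1)=1$ satisfying the $\Delta_2$-condition at zero, i.e. $\limsup_{u\to0}N(2u)/N(u)<\infty$. Let $U_N$ be the Banach sequence lattice of real sequences $a$ with $$\|a\|_{U_N}=\inf\Big\{u>0:\sum_{k=1}^\infty2^{k-1}N\Big(\frac{|a_k|}{u}\Big)\le1\Big\}<\infty.$$ Then $\|a\|_{l_N}\asymp\|\sum_{k=0}^\infty a^*_{2^k}e_{k+1}\|_{U_N}$ (more precisely $\|a\|_{l_N}\le\|\sum_{k\ge0}a^*_{2^k}e_{k+1}\|_{U_N}\le4\|a\|_{l_N}$), and $E_{l_N}=U_N$ with equivalent norms.
   Context: An Orlicz function is an increasing convex continuous function $N$ on $[0,\infty)$ with $N(0)=0$ and $\lim_{t\to\infty}N(t)=\infty$. The Orlicz sequence space $l_N$ consists of real sequences $a$ with $\|a\|_{l_N}=\inf\{u>0:\sum_kN(|a_k|/u)\le1\}<\infty$. $a^*$ is the nonincreasing rearrangement of $(|a_k|)$. For a symmetric sequence space $X$, $E_X$ is the Banach sequence lattice of real sequences $a$ with $\|a\|_{E_X}:=\|\sum_{k=1}^\infty a_k\sum_{i=2^{k-1}}^{2^k-1}e_i\|_X<\infty$. *)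

(* Defs.v *)
From HB Require Import structures.
From mathcomp Require Import all_boot all_order all_algebra.
From mathcomp Require Import all_classical all_reals all_analysis.
Set Implicit Arguments. Unset Strict Implicit. Unset Printing Implicit Defensive.
Import Order.TTheory GRing.Theory Num.Theory numFieldNormedType.Exports.
Local Open Scope classical_set_scope.
Local Open Scope ring_scope.

(* Sequences are indexed from 0: the Rocq value a k is the paper's a_(k+1). *)

Definition orlicz {R : realType} (N : R -> R) : Prop :=
  [/\ N 0 = 0,
      (forall s t : R, 0 <= s -> s < t -> N s < N t),
      (forall (s t l : R), 0 <= s -> 0 <= t -> 0 <= l <= 1 ->
          N (l * s + (1 - l) * t) <= l * N s + (1 - l) * N t),
      {within [set x : R | 0 <= x], continuous N} &
      (forall M : R, exists t0 : R, forall t, t0 <= t -> M <= N t)].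

Definition delta2_zero {R : realType} (N : R -> R) : Prop :=
  exists (C d : R), 0 < d /\ forall u : R, 0 < u -> u < d -> N (2 * u) <= C * N u.

(* Luxemburg norm of l_N (value +oo when the sequence is not in l_N). *)
Definition lN_norm {R : realType} (N : R -> R) (a : nat -> R) : \bar R :=
  ereal_inf (EFin @` [set u : R | 0 < u /\
     (\sum_(0 <= k <oo) (N (`|a k| / u))%:E <= 1)%E]).

Definition Next {R : realType} (N : R -> R) (x : \bar R) : \bar R :=
  match x with EFin r => (N r)%:E | _ => +oo%E end.

(* Norm of U_N, for extended-real-valued sequences (paper index k = Rocq k+1,
   so the weight 2^(k-1) becomes 2^k). *)
Definition UN_norm {R : realType} (N : R -> R) (b : nat -> \bar R) : \bar R :=
  ereal_inf (EFin @` [set u : R | 0 < u /\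
     (\sum_(0 <= k <oo) ((2 ^ k)%:R)%:E * Next N (`|b k| * (u^-1)%:E) <= 1)%E]).

(* Nonincreasing rearrangement: astar a n = a^*_n (n >= 1)
   = inf { t >= 0 : #{k : |a_k| > t} < n }  (value in \bar R). *)
Definition astar {R : realType} (a : nat -> R) (n : nat) : \bar R :=
  ereal_inf (EFin @` [set t : R | 0 <= t /\
     exists s : seq nat, (size s < n)%N /\ forall k, t < `|a k| -> k \in s]).

Definition dyadic_rearr {R : realType} (a : nat -> R) : nat -> \bar R :=
  fun k => astar a (2 ^ k).

(* sum_k a_k sum_{i=2^(k-1)}^{2^k-1} e_i, 0-indexed: coordinate i gets
   a_(trunc_log 2 (i+1)). *)
Definition dyadic_expand {R : realType} (a : nat -> R) : nat -> R :=
  fun i => a (trunc_log 2 i.+1).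

Definition ElN_norm {R : realType} (N : R -> R) (a : nat -> R) : \bar R :=
  lN_norm N (dyadic_expand a).

(* Main.v *)
Require Import Defs.
From HB Require Import structures.
From mathcomp Require Import all_boot all_order all_algebra.
From mathcomp Require Import all_classical all_reals all_analysis.
From mathcomp Require Import zify ring.
Import Order.TTheory GRing.Theory Num.Theory numFieldNormedType.Exports.
Local Open Scope classical_set_scope.
Local Open Scope ring_scope.

Lemma Nmono {R : realType} {N : R -> R} : orlicz N ->
  forall s t : R, 0 <= s -> s <= t -> N s <= N t.
Proof.
case=> _ Ninc _ _ _ s t s0 st.
by case: (ltgtP s t) st => // [/(Ninc _ _ s0) /ltW|->].
Qed.

Lemma Nge0 {R : realType} {N : R -> R} : orlicz N -> forall s : R, 0 <= s -> 0 <= N s.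
Proof.
move=> hN s s0; have := @Nmono _ _ hN 0 s (lexx 0) s0; by case: hN => ->.
Qed.

Lemma Nhalf {R : realType} {N : R -> R} : orlicz N -> forall y : R, 0 <= y ->
  N (y / 2) <= N y / 2.
Proof.
move=> hN y y0; case: (hN) => N0 _ Nc _ _.
have := Nc y 0 (2^-1) y0 (lexx 0).
rewrite invr_ge0 ler0n /= invf_le1 ?ler1n// => /(_ isT).
by rewrite !mulr0 N0 mulr0 !addr0 mulrC [_ * N y]mulrC.
Qed.

Lemma astar_ge0 {R : realType} (a : nat -> R) n : (0 <= astar a n)%E.
Proof.
by apply: le_ereal_inf_tmp => _ [t [t0 _] <-]; rewrite lee_fin.
Qed.

Lemma astar_anti {R : realType} (a : nat -> R) n m : (n <= m)%N ->
  (astar a m <= astar a n)%E.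
Proof.
move=> nm; apply: ereal_inf_le_tmp => _ [t [t0 [s [ss H]]] <-].
exists t => //; split => //; exists s; split => //; exact: leq_trans nm.
Qed.

Lemma astar_lb {R : realType} (a : nat -> R) (s : seq nat) (x : R) :
  uniq s -> 0 <= x -> (forall j, j \in s -> x <= `|a j|) ->
  (x%:E <= astar a (size s))%E.
Proof.
move=> us x0 H; apply: le_ereal_inf_tmp => _ [t [t0 [s' [ss' H']]] <-].
rewrite lee_fin leNgt; apply/negP => tx.
have : (size s <= size s')%N.
  apply: uniq_leq_size => // j js; apply: H'.
  exact: lt_le_trans tx (H j js).
by rewrite leqNgt ss'.
Qed.

Lemma astar_gt {R : realType} (a : nat -> R) (n : nat) (t : R) :
  0 <= t -> (t%:E < astar a n)%E ->
  forall s : seq nat, (size s < n)%N -> exists j, t < `|a j| /\ j \notin s.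
Proof.
move=> t0 ta s sn; apply: contrapT => hn.
have : (astar a n <= t%:E)%E.
  apply: ereal_inf_lbound; exists t => //; split => //; exists s; split => //.
  move=> k tk; apply: contrapT => ks; apply: hn; exists k; split => //.
  exact/negP.
by rewrite leNgt ta.
Qed.

Lemma ser_le {R : realType} (u : nat -> \bar R) (c : \bar R) : (forall n, (0 <= u n)%E) ->
  (forall k, (\sum_(0 <= i < k) u i <= c)%E) -> (\sum_(0 <= i <oo) u i <= c)%E.
Proof.
move=> u0 H; apply: lime_le.
  by apply: is_cvg_nneseries => n _ _; exact: u0.
by apply: nearW => k; exact: H.
Qed.

Lemma ser_ge {R : realType} (u : nat -> \bar R) k : (forall n, (0 <= u n)%E) ->
  (\sum_(0 <= i < k) u i <= \sum_(0 <= i <oo) u i)%E.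
Proof.
move=> u0; exact: (@nneseries_lim_ge R u xpredT 0 k (fun n _ _ => u0 n)).
Qed.

Lemma min_exists {R : realType} (f : nat -> R) (s : seq nat) : s != [::] ->
  exists2 j, j \in s & forall i, i \in s -> f j <= f i.
Proof.
elim: s => // x s IH _; case: (eqVneq s [::]) => [->|sn].
  by exists x => [|i]; rewrite ?mem_seq1 ?inE// => /eqP->.
case: (IH sn) => y ys Hy.
case: (leP (f x) (f y)) => [xy|yx].
  exists x; rewrite ?inE ?eqxx// => i; rewrite inE => /orP[/eqP->//|/Hy].
  exact: le_trans.
exists y; rewrite ?inE ?ys ?orbT// => i; rewrite inE => /orP[/eqP->|/Hy//].
exact: ltW.
Qed.

Lemma psum_mono {R : realType} (f : nat -> R) n m : (forall i, 0 <= f i) -> (n <= m)%N ->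
  \sum_(0 <= i < n) f i <= \sum_(0 <= i < m) f i.
Proof.
move=> f0 nm; rewrite (big_cat_nat (leq0n n) nm) /= lerDl.
by apply: sumr_ge0 => i _; exact: f0.
Qed.

Lemma sum_uniq_le {R : realType} (f : nat -> R) (s : seq nat) : (forall i, 0 <= f i) ->
  uniq s -> exists m, \sum_(j <- s) f j <= \sum_(0 <= i < m) f i.
Proof.
move=> f0 us; exists (\max_(j <- s) j).+1.
have -> : \sum_(j <- s) f j =
   \sum_(i <- index_iota 0 (\max_(j <- s) j).+1 | i \in s) f i.
  rewrite -[RHS]big_filter; apply: perm_big.
  apply: uniq_perm => //.
    by rewrite filter_uniq// iota_uniq.
  move=> i; rewrite mem_filter /index_iota subn0 mem_iota /= add0n.
  case: (boolP (i \in s)) => //= iS; rewrite ltnS.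
  by apply/esym; apply: (leq_bigmax_seq (F := id)) iS _.
rewrite big_mkcond /=; apply: ler_sum => i _. case: ifP => _ //.
Qed.

Lemma sum_uniq_le_ser {R : realType} (f : nat -> R) (s : seq nat) : (forall i, 0 <= f i) ->
  uniq s -> ((\sum_(j <- s) f j)%:E <= \sum_(0 <= i <oo) (f i)%:E)%E.
Proof.
move=> f0 us; case: (@sum_uniq_le _ f s f0 us) => m Hm.
apply: (le_trans _ (ser_ge (fun i => (f i)%:E) m _)); last by move=> n; rewrite lee_fin.
by rewrite sumEFin lee_fin.
Qed.

Lemma dyad_sum {R : realType} (g : nat -> R) K :
  \sum_(0 <= i < (2 ^ K).-1) g (trunc_log 2 i.+1) = \sum_(k < K) (2 ^ k)%:R * g k.
Proof.
elim: K => [|K IH]; first by rewrite expn0 big_geq// big_ord0.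
rewrite big_ord_recr /= -IH.
have h1 : (0 < 2 ^ K)%N by rewrite expn_gt0.
have hle : ((2 ^ K).-1 <= (2 ^ K.+1).-1)%N.
  by rewrite -!subn1 leq_sub2r// leq_exp2l.
rewrite (big_cat_nat (leq0n _) hle) /=; congr (_ + _).
rewrite (eq_big_nat _ _ (F2 := fun _ => g K)); last first.
  move=> i /andP[i1 i2]; congr g; apply: trunc_log_eq => //.
  rewrite -ltnS prednK // in i1; rewrite i1 /=.
  by rewrite -(ltn_add2r 1) !addn1 prednK ?expn_gt0 // in i2.
rewrite sumr_const_nat mulr_natl; congr (_ *+ _).
rewrite expnS; move: h1; move: (2 ^ K)%N => x h1; lia.
Qed.

Lemma ser_dyad {R : realType} (g : nat -> R) : (forall k, 0 <= g k) ->
  (\sum_(0 <= i <oo) (g (trunc_log 2 i.+1))%:E = \sum_(0 <= k <oo) ((2 ^ k)%:R * g k)%:E)%E.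
Proof.
move=> g0.
have g0' : forall n, (0 <= ((2 ^ n)%:R * g n)%:E)%E.
  by move=> n; rewrite lee_fin mulr_ge0.
have g0'' : forall n, (0 <= (g (trunc_log 2 n.+1))%:E)%E.
  by move=> n; rewrite lee_fin.
apply/le_anti/andP; split.
  apply: ser_le => // k; apply: le_trans (ser_ge _ k g0').
  rewrite !sumEFin lee_fin [in leRHS]big_mkord -dyad_sum; apply: psum_mono => //.
  by rewrite -ltnS prednK ?expn_gt0 // ltn_expl.
apply: ser_le => // k; apply: le_trans (ser_ge _ (2 ^ k).-1 g0'').
by rewrite !sumEFin lee_fin big_mkord -dyad_sum.
Qed.

Lemma part3 {R : realType} (N : R -> R) (a : nat -> R) :
  (forall s, 0 <= s -> 0 <= N s) ->
  ElN_norm N a = UN_norm N (fun k => (a k)%:E).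
Proof.
move=> N0; rewrite /ElN_norm /lN_norm /UN_norm; congr ereal_inf; congr image.
apply/seteqP; split => u [u0 H]; split => //; move: H.
  rewrite /dyadic_expand (ser_dyad (fun k => N (`|a k| / u))); last first.
    by move=> k; apply: N0; rewrite divr_ge0 // ltW.
  by congr (_ <= _)%E; congr lim; apply: funext => n; apply: eq_bigr => k _ /=; rewrite EFinM.
rewrite /dyadic_expand (ser_dyad (fun k => N (`|a k| / u))); last first.
  by move=> k; apply: N0; rewrite divr_ge0 // ltW.
by congr (_ <= _)%E; congr lim; apply: funext => n; apply: eq_bigr => k _ /=; rewrite EFinM.
Qed.

Lemma P1 {R : realType} {N : R -> R} (hN : orlicz N) (a : nat -> R) (x : nat -> R) (v : R) :
  0 < v -> (forall n, (0 < n)%N -> astar a n = (x n)%:E) ->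
  forall s, uniq s -> \sum_(j <- s) N (`|a j| / v) <= \sum_(0 <= n < size s) N (x n.+1 / v).
Proof.
move=> v0 hx s us.
suff H : forall m s, size s = m -> uniq s ->
  \sum_(j <- s) N (`|a j| / v) <= \sum_(0 <= n < m) N (x n.+1 / v) by exact: H.
elim=> [|m IH] {}s sm {}us.
  by move/size0nil: sm => ->; rewrite big_nil big_geq.
have sn : s != [::] by apply/eqP => s0; rewrite s0 in sm.
case: (@min_exists _ (fun j => `|a j|) s sn) => j0 j0s Hj0.
rewrite (big_rem j0 j0s) /= big_nat_recr //= addrC.
apply: lerD.
  apply: IH; first by rewrite size_rem // sm.
  exact: rem_uniq.
apply: (Nmono hN); first by rewrite divr_ge0 // ltW.
apply: ler_wpM2r; first by rewrite invr_ge0 ltW.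
have := astar_lb a s (`|a j0|) us (normr_ge0 (a j0)) Hj0.
by rewrite sm hx // lee_fin.
Qed.

Lemma Next0 {R : realType} {N : R -> R} (hN : orlicz N) (y : \bar R) :
  (0 <= y)%E -> (0 <= Next N y)%E.
Proof.
case: y => [r| |] //= r0; rewrite ?lee_fin ?le0y //.
by apply: (Nge0 hN); rewrite -lee_fin.
Qed.

Lemma part1 {R : realType} {N : R -> R} (hN : orlicz N) (a : nat -> R) (v : R) :
  0 < v ->
  (\sum_(0 <= k <oo) ((2 ^ k)%:R)%:E * Next N (`|astar a (2 ^ k)| * (v^-1)%:E) <= 1)%E ->
  (\sum_(0 <= k <oo) (N (`|a k| / v))%:E <= 1)%E.
Proof.
move=> v0 HU.
have t0 : forall k, (0 <= ((2 ^ k)%:R)%:E * Next N (`|astar a (2 ^ k)| * (v^-1)%:E))%E.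
  move=> k; apply: mule_ge0; first by rewrite lee_fin.
  apply: (Next0 hN); apply: mule_ge0 => //; rewrite lee_fin invr_ge0 ltW //.
have fin1 : exists x1, astar a 1 = x1%:E.
  move: (astar_ge0 a 1); case E: (astar a 1) => [r| |] // _; first by exists r.
  have := le_trans (ser_ge _ 1 t0) HU.
  rewrite big_nat1 expn0 E /= gt0_mulye ?lte_fin ?invr_gt0 // mul1e.
  by rewrite leNgt ltey.
case: fin1 => x1 hx1.
pose x n := fine (astar a n).
have hx : forall n, (0 < n)%N -> astar a n = (x n)%:E.
  move=> n n0; rewrite /x fineK // ge0_fin_numE ?astar_ge0 //.
  by apply: le_lt_trans (astar_anti a 1 n n0) _; rewrite hx1 ltey.
have x0 : forall n, 0 <= x n by move=> n; apply: fine_ge0; exact: astar_ge0.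
apply: ser_le => [n|m]; first by rewrite lee_fin (Nge0 hN) // divr_ge0 // ltW.
apply: le_trans (le_trans (ser_ge _ m t0) HU).
rewrite sumEFin.
have -> : (\sum_(0 <= i < m) ((2 ^ i)%N%:R)%:E * Next N (`|astar a (2 ^ i)%N| * (v^-1)%:E) =
   (\sum_(0 <= i < m) (2 ^ i)%N%:R * N (x (2 ^ i)%N / v))%:E)%E.
  rewrite -sumEFin; apply: eq_bigr => k _.
  by rewrite hx ?expn_gt0 //= ger0_norm // EFinM.
rewrite lee_fin.
have ui : uniq (index_iota 0 m) by rewrite /index_iota iota_uniq.
apply: le_trans (P1 hN a x v v0 hx _ ui) _.
rewrite /index_iota subn0 size_iota.
apply: le_trans (psum_mono _ m (2 ^ m).-1 _ _) _.
- by move=> i; rewrite (Nge0 hN) // divr_ge0 // ltW.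
- by rewrite -ltnS prednK ?expn_gt0 // ltn_expl.
apply: le_trans (_ : _ <= \sum_(0 <= i < (2 ^ m).-1) N (x (2 ^ (trunc_log 2 i.+1))%N / v)) _.
  apply: ler_sum => i _; apply: (Nmono hN); first by rewrite divr_ge0 // ltW.
  apply: ler_wpM2r; first by rewrite invr_ge0 ltW.
  have := astar_anti a _ _ (trunc_logP (isT : (1 < 2)%N) (ltn0Sn i)).
  by rewrite !hx ?expn_gt0 // lee_fin.
by rewrite (dyad_sum (fun k => N (x (2 ^ k)%N / v))) -[iota 0 (m - 0)]/(index_iota 0 m) big_mkord.
Qed.

Lemma ext_seq {R : realType} (a : nat -> R) (t : R) (n : nat) :
  (forall s', (size s' < n)%N -> exists j, t < `|a j| /\ j \notin s') ->
  forall r s, (size s + r <= n)%N -> exists s2, [/\ uniq s2, size s2 = r,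
     (forall j, j \in s2 -> t < `|a j|) & (forall j, j \in s2 -> j \notin s)].
Proof.
move=> H; elim=> [|r IH] s hs; first by exists [::].
have [s2 [u2 z2 h2 d2]] := IH s (leq_trans (leq_add (leqnn _) (leqnSn r)) hs).
have [j [tj js]] : exists j, t < `|a j| /\ j \notin s ++ s2.
  by apply: H; rewrite size_cat z2; rewrite addnS in hs.
rewrite mem_cat negb_or in js; case/andP: js => js1 js2.
exists (j :: s2); split => /=; first by rewrite js2.
- by rewrite z2.
- by move=> i; rewrite inE => /orP[/eqP->//|]; exact: h2.
- by move=> i; rewrite inE => /orP[/eqP->//|]; exact: d2.
Qed.

Lemma sum_const_seq {R : realType} (s : seq nat) (c : R) :
  \sum_(j <- s) c = c *+ size s.
Proof. by elim: s => [|j s IH]; rewrite ?big_nil ?big_cons ?IH ?mulrS. Qed.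

Lemma Q2 {R : realType} {N : R -> R} (hN : orlicz N) (a : nat -> R) (u : R) (t : nat -> R) :
  0 < u -> (forall k, 0 <= t k) ->
  (forall k, 0 < t k -> forall s', (size s' < 2 ^ k)%N -> exists j, t k < `|a j| /\ j \notin s') ->
  forall K, exists s, [/\ uniq s, (size s <= 2 ^ K)%N &
    \sum_(k < K.+1) (2 ^ k)%N%:R * N (t k / u) <= 2 * \sum_(j <- s) N (`|a j| / u)].
Proof.
move=> u0 t0 Ht.
have Nt : forall k, 0 <= N (t k / u) by move=> k; apply: (Nge0 hN); rewrite divr_ge0 // ltW.
have Na : forall j, 0 <= N (`|a j| / u) by move=> j; apply: (Nge0 hN); rewrite divr_ge0 // ltW.
have tle : forall k j, t k < `|a j| -> N (t k / u) <= N (`|a j| / u).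
  move=> k j tj; apply: (Nmono hN); first by rewrite divr_ge0 // ltW.
  by apply: ler_wpM2r; [rewrite invr_ge0 ltW | exact: ltW].
have N0 : N 0 = 0 by case: hN.
elim=> [|K [s [us ss Hs]]].
  rewrite big_ord1 expn0 mul1r.
  case: (eqVneq (t 0%N) 0) => [->|tn].
    by exists [::]; rewrite mul0r N0 big_nil mulr0.
  have tp : 0 < t 0%N by rewrite lt_neqAle eq_sym tn t0.
  have [j [tj _]] := Ht _ tp [::] isT.
  exists [:: j]; split => //; rewrite big_seq1.
  apply: le_trans (tle _ _ tj) _; rewrite ler_peMl // ?ler1n //; exact: Na.
rewrite big_ord_recr /=.
case: (eqVneq (t K.+1) 0) => [->|tn].
  exists s; split => //; first by apply: leq_trans ss _; rewrite leq_exp2l.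
  by rewrite mul0r N0 mulr0 addr0.
have tp : 0 < t K.+1 by rewrite lt_neqAle eq_sym tn t0.
have hs : (size s + 2 ^ K <= 2 ^ K.+1)%N by rewrite expnS mul2n -addnn leq_add2r.
have [s2 [u2 z2 h2 d2]] := ext_seq a _ _ (Ht _ tp) _ _ hs.
exists (s ++ s2); split.
- rewrite cat_uniq us u2 andbT /=; apply/hasPn => j /d2 //.
- by rewrite size_cat z2 (leq_trans _ hs) // leq_add2r.
rewrite big_cat /= mulrDr; apply: lerD => //.
have : (2 ^ K)%N%:R * N (t K.+1 / u) <= \sum_(j <- s2) N (`|a j| / u).
  rewrite -z2 mulr_natl -sum_const_seq; rewrite big_seq_cond [in leRHS]big_seq_cond; apply: ler_sum => j /andP[js _].
  exact: tle (h2 _ js).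
by rewrite expnS natrM -mulrA => H; apply: ler_wpM2l.
Qed.

Lemma part2 {R : realType} {N : R -> R} (hN : orlicz N) (a : nat -> R) (u : R) :
  0 < u ->
  (\sum_(0 <= k <oo) (N (`|a k| / u))%:E <= 1)%E ->
  (\sum_(0 <= k <oo) ((2 ^ k)%:R)%:E * Next N (`|astar a (2 ^ k)| * ((4 * u)^-1)%:E) <= 1)%E.
Proof.
move=> u0 HL.
have Na : forall j, 0 <= N (`|a j| / u) by move=> j; apply: (Nge0 hN); rewrite divr_ge0 // ltW.
have single : forall s, uniq s -> \sum_(j <- s) N (`|a j| / u) <= 1.
  move=> s us; rewrite -lee_fin; apply: le_trans HL.
  exact: sum_uniq_le_ser.
have fin : forall n, (0 < n)%N -> (astar a n < +oo)%E.
  move=> n n0; rewrite ltey; apply/negP => /eqP E.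
  case: (hN) => _ Ninc _ _ /(_ 2) [t1 Ht1].
  pose T := u * (`|t1| + 1).
  have T0 : 0 <= T by apply: mulr_ge0; [exact: ltW | apply: addr_ge0].
  have [j [Tj _]] := astar_gt a n T T0 ltac:(by rewrite E ltey) [::] n0.
  have := single [:: j] isT; rewrite big_seq1.
  move=> h2.
  have h1 : 2 <= N (T / u).
    have -> : T / u = `|t1| + 1 by rewrite /T mulrC mulKf // gt_eqF.
    by apply: Ht1; apply: le_trans (ler_norm t1) _; rewrite lerDl.
  have : N (T / u) < N (`|a j| / u).
    apply: Ninc; first by rewrite divr_ge0 // ltW.
    by rewrite ltr_pM2r // invr_gt0.
  move=> h3; have := lt_le_trans (le_lt_trans h1 h3) h2.
  by rewrite ltNge ler1n.
pose x n := fine (astar a n).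
have hx : forall n, (0 < n)%N -> astar a n = (x n)%:E.
  by move=> n n0; rewrite /x fineK // ge0_fin_numE ?astar_ge0 // fin.
have x0 : forall n, 0 <= x n by move=> n; apply: fine_ge0; exact: astar_ge0.
have t0 : forall k, (0 <= ((2 ^ k)%:R)%:E * Next N (`|astar a (2 ^ k)| * ((4 * u)^-1)%:E))%E.
  move=> k; rewrite hx ?expn_gt0 //= -EFinM lee_fin mulr_ge0 //.
  by apply: (Nge0 hN); rewrite mulr_ge0 // invr_ge0 mulr_ge0 // ltW.
apply: ser_le => // K.
have -> : (\sum_(0 <= i < K) ((2 ^ i)%N%:R)%:E * Next N (`|astar a (2 ^ i)%N| * ((4 * u)^-1)%:E) =
   (\sum_(0 <= i < K) (2 ^ i)%N%:R * N (x (2 ^ i)%N / (4 * u)))%:E)%E.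
  rewrite -sumEFin; apply: eq_bigr => k _.
  by rewrite hx ?expn_gt0 //= ger0_norm // EFinM.
rewrite lee_fin; case: K => [|K]; first by rewrite big_geq.
pose t k := x (2 ^ k)%N / 2.
have tt0 : forall k, 0 <= t k by move=> k; rewrite divr_ge0.
have Ht : forall k, 0 < t k -> forall s', (size s' < 2 ^ k)%N -> exists j, t k < `|a j| /\ j \notin s'.
  move=> k tk; apply: astar_gt => //.
  rewrite hx ?expn_gt0 // lte_fin /t ltr_pdivrMr // ltr_pMr ?ltr1n //.
  by rewrite pmulr_lgt0 // in tk.
have [s [us _ Hs]] := Q2 hN a u t u0 tt0 Ht K.
apply: le_trans (single s us).
rewrite -(ler_pM2l (_ : 0 < 2)) //; apply: le_trans Hs.
rewrite -(big_mkord xpredT (fun k => (2 ^ k)%N%:R * N (t k / u))) mulr_sumr; apply: ler_sum => k _.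
rewrite mulrCA; apply: ler_wpM2l => //.
have e : x (2 ^ k)%N / (4 * u) = (t k / u) / 2.
  by rewrite /t; field; rewrite gt_eqF.
rewrite e; have h := Nhalf hN _ (divr_ge0 (tt0 k) (ltW u0)).
by rewrite mulrC -ler_pdivlMr // mulrC.
Qed.

Theorem mainTheorem18 (R : realType) (N : R -> R) :
  orlicz N -> N 1 = 1 -> delta2_zero N ->
  (forall a : nat -> R,
     (lN_norm N a <= UN_norm N (dyadic_rearr a))%E /\
     (UN_norm N (dyadic_rearr a) <= 4%:E * lN_norm N a)%E) /\
  (exists C : R, 0 < C /\ forall a : nat -> R,
     (ElN_norm N a <= C%:E * UN_norm N (fun k => (a k)%:E))%E /\
     (UN_norm N (fun k => (a k)%:E) <= C%:E * ElN_norm N a)%E).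
Proof.
move=> hN _ _; split; last first.
  exists 1; split => // a; rewrite (part3 N a (Nge0 hN)) mul1e; split => //.
move=> a; split.
  apply: ereal_inf_le_tmp => _ [v [v0 Hv] <-]; exists v => //; split => //.
  exact: part1 hN a v v0 Hv.
have key : forall u, 0 < u ->
    (\sum_(0 <= k <oo) (N (`|a k| / u))%:E <= 1)%E ->
    (UN_norm N (dyadic_rearr a) <= (4 * u)%:E)%E.
  move=> u u0 Hu; apply: ereal_inf_lbound; exists (4 * u) => //; split.
    by rewrite mulr_gt0.
  exact: part2 hN a u u0 Hu.
have L0 : (0 <= lN_norm N a)%E.
  by apply: le_ereal_inf_tmp => _ [u [u0 _] <-]; rewrite lee_fin ltW.
move: L0; case E: (lN_norm N a) => [l| |] // L0.
  apply/lee_addgt0Pr => e e0.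
  have e4 : 0 < e / 4 by rewrite divr_gt0.
  have fL : lN_norm N a \is a fin_num by rewrite E.
  have [_ [u [u0 Hu] <-] hy] := lb_ereal_inf_adherent e4 fL.
  apply: le_trans (key u u0 Hu) _.
  move: hy; rewrite /lN_norm in E; rewrite E -EFinD lte_fin => hy.
  rewrite -EFinM -EFinD lee_fin.
  have : 4 * u <= 4 * (l + e / 4) by rewrite ler_pM2l // ltW.
  by rewrite mulrDr mulrCA divff ?mulr1 // pnatr_eq0.
by rewrite gt0_muley ?lte_fin // leey.
Qed.
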